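(* Let $n\ge 2$ and let $\eta_1,\dots,\eta_n$ be real numbers with $\eta_1+\cdots+\eta_n=0$ and $\eta_1^2+\cdots+\eta_n^2=1$. Let $r_{ij}\geq 0$ be nonnegative real numbers for $1\le i<j\le n$. Then \[ \sum_{i<j}(\eta_i-\eta_j)^2 r_{ij}\leq \sum_{i<j}r_{ij}+\max_{i<j} r_{ij}. \] *)

(* Defs.v *)
From mathcomp Require Import all_boot all_order all_algebra.
From mathcomp Require Import reals.
Set Implicit Arguments. Unset Strict Implicit. Unset Printing Implicit Defensive.

(* Main.v *)
Require Import Defs.
From mathcomp Require Import all_boot all_order all_algebra.
From mathcomp Require Import reals.
From mathcomp Require Import ring lra.
Import Order.TTheory GRing.Theory Num.Theory.
Local Open Scope ring_scope.

Lemma CS_gen (R : realType) (n : nat) (a b c : 'I_n -> R) :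
  (forall v, 0 <= a v) ->
  (\sum_v a v * b v * c v) ^+ 2 <=
  (\sum_v a v * b v ^+ 2) * (\sum_v a v * c v ^+ 2).
Proof.
move=> ha.
set P := \sum_v a v * b v ^+ 2; set Q := \sum_v a v * c v ^+ 2.
set T := \sum_v a v * b v * c v.
have key : 2 * (P * Q - T ^+ 2) =
  \sum_v \sum_w a v * a w * (b v * c w - b w * c v) ^+ 2.
  have e1 : P * Q = \sum_v \sum_w (a v * b v ^+ 2) * (a w * c w ^+ 2).
    by rewrite /P /Q big_distrlr.
  have e2 : P * Q = \sum_v \sum_w (a w * b w ^+ 2) * (a v * c v ^+ 2).
    rewrite mulrC /P /Q big_distrlr /=.
    by apply: eq_bigr => v _; apply: eq_bigr => w _; rewrite mulrC.
  have e3 : T ^+ 2 = \sum_v \sum_w (a v * b v * c v) * (a w * b w * c w).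
    by rewrite expr2 /T big_distrlr.
  have -> : 2 * (P * Q - T ^+ 2) = P * Q + P * Q - 2 * T ^+ 2 by ring.
  rewrite {1}e1 e2 e3 mulr_sumr -big_split -sumrB /=.
  apply: eq_bigr => v _; rewrite mulr_sumr -big_split -sumrB /=.
  by apply: eq_bigr => w _; ring.
have H0 : 0 <= 2 * (P * Q - T ^+ 2).
  rewrite key; apply: sumr_ge0 => v _; apply: sumr_ge0 => w _.
  by rewrite mulr_ge0 ?sqr_ge0 // mulr_ge0.
by move: H0; rewrite pmulr_rge0 // subr_ge0.
Qed.

Definition wsym {R : realType} {n : nat} (r : 'I_n -> 'I_n -> R) (i j : 'I_n) : R :=
  if (i < j)%N then r i j else if (j < i)%N then r j i else 0.

Lemma wsym_sym (R : realType) (n : nat) (r : 'I_n -> 'I_n -> R) i j :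
  wsym r i j = wsym r j i.
Proof. by rewrite /wsym; case: ltngtP. Qed.

Lemma wsym_diag (R : realType) (n : nat) (r : 'I_n -> 'I_n -> R) i :
  wsym r i i = 0.
Proof. by rewrite /wsym ltnn. Qed.

Lemma wsum (R : realType) (n : nat) (r : 'I_n -> 'I_n -> R) (g : 'I_n -> 'I_n -> R) :
  (forall i j, g i j = g j i) ->
  \sum_(i < n) \sum_(j < n) wsym r i j * g i j = 2 * \sum_(i < n) \sum_(j < n | (i < j)%N) r i j * g i j.
Proof.
move=> gs.
have pw : forall i j : 'I_n, wsym r i j * g i j =
   (if (i < j)%N then r i j * g i j else 0) + (if (j < i)%N then r j i * g j i else 0).
  move=> i j; rewrite /wsym; case: ltngtP => h; rewrite ?mul0r ?addr0 ?add0r //.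
  by rewrite gs.
transitivity (\sum_(i < n) \sum_(j < n) (if (i < j)%N then r i j * g i j else 0)
   + \sum_(i < n) \sum_(j < n) (if (j < i)%N then r j i * g j i else 0)).
  rewrite -big_split; apply: eq_bigr => i _; rewrite -big_split.
  by apply: eq_bigr => j _; exact: pw.
rewrite [X in _ + X]exchange_big /=.
have E : \sum_(i < n) \sum_(j < n | (i < j)%N) r i j * g i j =
         \sum_(i < n) \sum_(j < n) (if (i < j)%N then r i j * g i j else 0).
  by apply: eq_bigr => i _; rewrite big_mkcond.
rewrite E; ring.
Qed.

Lemma delta (R : realType) (n : nat) (f : 'I_n -> R) u :
  \sum_a (a == u)%:R * f a = f u.
Proof.
rewrite (bigD1 u) //= eqxx mul1r big1 ?addr0 // => a /negbTE ->.
by rewrite mul0r.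
Qed.

Lemma delta2 (R : realType) (n : nat) (f : 'I_n -> R) u v :
  \sum_a ((a == u)%:R + (a == v)%:R) * f a = f u + f v.
Proof.
under eq_bigr do rewrite mulrDl.
by rewrite big_split /= !delta.
Qed.

Theorem mainTheorem4 (R : realType) (n : nat) (hn : (2 <= n)%N)
  (eta : 'I_n -> R) (r : 'I_n -> 'I_n -> R)
  (hsum : \sum_(i < n) eta i = 0)
  (hsq : \sum_(i < n) eta i ^+ 2 = 1)
  (hr : forall i j : 'I_n, (i < j)%N -> 0 <= r i j) :
  \sum_(i < n) \sum_(j < n | (i < j)%N) (eta i - eta j) ^+ 2 * r i j
  <= \sum_(i < n) \sum_(j < n | (i < j)%N) r i j
     + \big[Num.max/0]_(i < n) \big[Num.max/0]_(j < n | (i < j)%N) r i j.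
Proof.
set M := (X in _ <= _ + X).
set x := eta.
pose w := @wsym R n r.
have M0 : 0 <= M.
  rewrite /M; elim/big_ind: _ => //; first by move=> a b ha hb; rewrite le_max ha.
  move=> i _; elim/big_ind: _ => //; first by move=> a b ha hb; rewrite le_max ha.
  exact: hr.
have wge0 : forall i j, 0 <= w i j.
  move=> i j; rewrite /w /wsym; case: ltngtP => h //; exact: hr.
have wleM : forall i j, w i j <= M.
  have rl : forall i j : 'I_n, (i < j)%N -> r i j <= M.
    move=> i j hij; apply: le_trans (le_bigmax _ _ i).
    by apply: le_bigmax_cond.
  move=> i j; rewrite /w /wsym; case: ltngtP => h //; exact: rl.
have ws : forall i j, w i j = w j i by move=> i j; exact: wsym_sym.
set L := \sum_(i < n) \sum_(j < n | (i < j)%N) r i j * (x i - x j) ^+ 2.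
set W := \sum_(i < n) \sum_(j < n | (i < j)%N) r i j.
have -> : \sum_(i < n) \sum_(j < n | (i < j)%N) (eta i - eta j) ^+ 2 * r i j = L.
  by apply: eq_bigr => i _; apply: eq_bigr => j _; rewrite mulrC.
pose D u := \sum_(v < n) w u v.
pose F u := \sum_(v < n) w u v * (x u - x v) ^+ 2.
pose z u := \sum_(v < n) w u v * (x u - x v).
have esym : forall i j, (x i - x j) ^+ 2 = (x j - x i) ^+ 2.
  by move=> i j; rewrite -opprB sqrrN.
have hF : \sum_u F u = 2 * L by exact: wsum.
have hW : \sum_u D u = 2 * W.
  have := @wsum R n r (fun _ _ => 1) (fun _ _ => erefl).
  under eq_bigr do under eq_bigr do rewrite mulr1.
  by under [X in _ = 2 * X -> _]eq_bigr do under eq_bigr do rewrite mulr1.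
have L0 : 0 <= L.
  by apply: sumr_ge0 => i _; apply: sumr_ge0 => j hij; rewrite mulr_ge0 ?sqr_ge0 ?hr.
have W0 : 0 <= W.
  by apply: sumr_ge0 => i _; apply: sumr_ge0 => j hij; rewrite hr.
have hxz : \sum_u x u * z u = L.
  have A : \sum_u x u * z u = \sum_(u < n) \sum_(v < n) w u v * ((x u - x v) * x u).
    by apply: eq_bigr => u _; rewrite mulr_sumr; apply: eq_bigr => v _; ring.
  have B : \sum_(u < n) \sum_(v < n) w u v * ((x u - x v) * x u)
         = \sum_(u < n) \sum_(v < n) w u v * ((x v - x u) * x v).
    by rewrite exchange_big; apply: eq_bigr => u _; apply: eq_bigr => v _; rewrite ws.
  have : 2 * \sum_u x u * z u = 2 * L.
    rewrite -hF.
    have -> : 2 * \sum_u x u * z u = \sum_u x u * z u + \sum_u x u * z u by ring.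
    rewrite A {2}B -big_split; apply: eq_bigr => u _; rewrite -big_split.
    apply: eq_bigr => v _ /=.  ring.
  move=> hh; apply: (@mulfI _ 2) => //; by rewrite pnatr_eq0.
have hz : forall u, z u ^+ 2 <= D u * F u.
  move=> u.
  have e1 : z u = \sum_v w u v * 1 * (x u - x v).
    by apply: eq_bigr => v _; rewrite mulr1.
  have e2 : D u = \sum_v w u v * 1 ^+ 2.
    by apply: eq_bigr => v _; rewrite expr1n mulr1.
  rewrite e1 e2; exact: (@CS_gen R n (w u) (fun _ => 1) (fun v => x u - x v) (wge0 u)).
have hDD : forall u v, u != v -> D u + D v <= W + M.
  move=> u v uv.
  pose p a := ((a == u)%:R + (a == v)%:R : R).
  have p01 : forall a, p a = 0 \/ p a = 1.
    move=> a; rewrite /p; case: (a =P u) => [->|nau].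
      by rewrite (negbTE uv) addr0; right.
    by case: (a =P v) => _; [right; rewrite add0r | left; rewrite addr0].
  have pw : forall a b, w a b * (p a + p b) <= w a b + w a b * (p a * p b).
    move=> a b.
    have -> : w a b + w a b * (p a * p b) = w a b * (1 + p a * p b) by ring.
    apply: ler_wpM2l => //.
    by case: (p01 a) => ->; case: (p01 b) => ->; lra.
  have S1 : \sum_(a < n) \sum_(b < n) w a b * (p a + p b) = 2 * (D u + D v).
    transitivity (\sum_(a < n) p a * D a + \sum_(a < n) (w a u + w a v)).
      rewrite -big_split; apply: eq_bigr => a _ /=.
      rewrite /D mulr_sumr -(@delta2 R n (fun b => w a b) u v) -big_split.
      by apply: eq_bigr => b _ /=; rewrite /p; ring.
    rewrite /p delta2 big_split /=.
    have -> : \sum_(a < n) w a u = D u by apply: eq_bigr => a _; rewrite ws.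
    have -> : \sum_(a < n) w a v = D v by apply: eq_bigr => a _; rewrite ws.
    ring.
  have S2 : \sum_(a < n) \sum_(b < n) (w a b + w a b * (p a * p b)) = 2 * W + 2 * w u v.
    under eq_bigr do rewrite big_split /=.
    rewrite big_split /=.
    have -> : \sum_(a < n) \sum_(b < n) w a b = 2 * W by rewrite -hW.
    congr (_ + _).
    transitivity (\sum_(a < n) p a * (w a u + w a v)).
      apply: eq_bigr => a _; rewrite -(@delta2 R n (fun b => w a b) u v) mulr_sumr.
      by apply: eq_bigr => b _ /=; rewrite /p; ring.
    rewrite /p delta2 /w !wsym_diag (@wsym_sym R n r v u); ring.
  have : 2 * (D u + D v) <= 2 * W + 2 * w u v.
    rewrite -S1 -S2; apply: ler_sum => a _; apply: ler_sum => b _; exact: pw.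
  have := wleM u v; lra.
have hDF : \sum_u D u * F u <= (W + M) * L.
  have A : \sum_u D u * F u = \sum_(u < n) \sum_(v < n) D u * (w u v * (x u - x v) ^+ 2).
    by apply: eq_bigr => u _; rewrite mulr_sumr.
  have B : \sum_(u < n) \sum_(v < n) D u * (w u v * (x u - x v) ^+ 2)
         = \sum_(u < n) \sum_(v < n) D v * (w u v * (x u - x v) ^+ 2).
    by rewrite exchange_big; apply: eq_bigr => u _; apply: eq_bigr => v _; rewrite ws esym.
  have : 2 * \sum_u D u * F u <= 2 * ((W + M) * L).
    have -> : 2 * \sum_u D u * F u = \sum_u D u * F u + \sum_u D u * F u by ring.
    have -> : 2 * ((W + M) * L) = (W + M) * \sum_u F u by rewrite hF; ring.
    rewrite A {2}B -big_split /= mulr_sumr; apply: ler_sum => u _.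
    rewrite -big_split /= mulr_sumr; apply: ler_sum => v _.
    case: (eqVneq u v) => [<-|uv].
      by rewrite /w (@wsym_diag R n r u) !mul0r !mulr0 addr0.
    rewrite -mulrDl; apply: ler_wpM2r; first by rewrite mulr_ge0 ?sqr_ge0.
    exact: hDD.
  lra.
have hcs : L ^+ 2 <= \sum_u z u ^+ 2.
  have := @CS_gen R n (fun _ => 1) x z (fun _ => ler01).
  under eq_bigr do rewrite mul1r.
  under [X in _ <= X * _]eq_bigr do rewrite mul1r.
  under [X in _ <= _ * X]eq_bigr do rewrite mul1r.
  by rewrite hxz hsq mul1r.
have hz2 : \sum_u z u ^+ 2 <= \sum_u D u * F u by apply: ler_sum => u _; exact: hz.
have : L ^+ 2 <= (W + M) * L by apply: le_trans hcs (le_trans hz2 hDF).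
nra.
Qed.
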